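(* Let $G$ be a compact Hausdorff topological group and $p\colon E\to B$ a $G$-map of Hausdorff $G$-spaces. If $p(E^H)=B^H$ for all closed subgroups $H$ of $G$, then $\mathrm{secat}_G(p)\le\mathrm{cat}_G(B)$.
   Context: $X^H=\{x: hx=x\ \forall h\in H\}$. A $G$-homotopy is an equivariant homotopy with $G$ acting trivially on $I$. An invariant set $U\subseteq B$ is $G$-categorical if its inclusion is $G$-homotopic to a map with values in a single orbit; $\mathrm{cat}_G(B)$ is the least $k$ such that $B$ is covered by $k$ open $G$-categorical sets. $\mathrm{secat}_G(p)$ is the least $k$ such that $B$ is covered by $k$ invariant open sets $U_i$ each admitting a $G$-map $s\colon U_i\to E$ with $ps$ $G$-homotopic to the inclusion ($\infty$ if none). *)

(* Defs.v *)
From HB Require Import structures.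
From mathcomp Require Import all_boot all_order all_algebra.
From mathcomp Require Import all_classical all_reals topology normedtype.
Import numFieldNormedType.Exports.
Set Implicit Arguments. Unset Strict Implicit. Unset Printing Implicit Defensive.
Import Order.TTheory GRing.Theory Num.Theory.
Local Open Scope classical_set_scope.
Local Open Scope ring_scope.

Section Equivariant.
Variables (R : realType) (G : topologicalType)
  (mul : G -> G -> G) (inv : G -> G) (one : G).

Definition is_topological_group : Prop :=
  [/\ (forall a b c, mul a (mul b c) = mul (mul a b) c),
      (forall a, mul one a = a /\ mul a one = a),
      (forall a, mul (inv a) a = one /\ mul a (inv a) = one),
      continuous (fun z : G * G => mul z.1 z.2) &
      continuous inv].

Definition is_G_space (X : topologicalType) (a : G -> X -> X) : Prop :=
  [/\ (forall x, a one x = x),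
      (forall g h x, a (mul g h) x = a g (a h x)) &
      continuous (fun z : G * X => a z.1 z.2)].

Definition is_G_map (X Y : topologicalType) (aX : G -> X -> X)
  (aY : G -> Y -> Y) (f : X -> Y) : Prop :=
  continuous f /\ (forall g x, f (aX g x) = aY g (f x)).

Definition closed_subgroup (H : set G) : Prop :=
  [/\ closed H, H one, (forall g h, H g -> H h -> H (mul g h)) &
      (forall g, H g -> H (inv g))].

Definition fixed_pts (X : Type) (a : G -> X -> X) (H : set G) : set X :=
  [set x | forall h, H h -> a h x = x].

Definition invariant (X : Type) (a : G -> X -> X) (U : set X) : Prop :=
  forall g x, U x -> U (a g x).

Definition orbit (X : Type) (a : G -> X -> X) (x0 : X) : set X :=
  [set y | exists g, y = a g x0].

Definition G_homotopic (X Y : topologicalType) (aX : G -> X -> X)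
  (aY : G -> Y -> Y) (U : set X) (F0 F1 : X -> Y) : Prop :=
  exists Hm : X * R -> Y,
    [/\ {within (U `*` [set t : R | (0 <= t <= 1)%R]) : set (X * R), continuous Hm},
        (forall x, U x -> Hm (x, 0%R) = F0 x /\ Hm (x, 1%R) = F1 x) &
        (forall g x t, U x -> (0 <= t <= 1)%R ->
           Hm (aX g x, t) = aY g (Hm (x, t)))].

Definition G_categorical (B : topologicalType) (aB : G -> B -> B)
  (U : set B) : Prop :=
  invariant aB U /\
  exists (F1 : B -> B) (b0 : B),
    (forall b, U b -> orbit aB b0 (F1 b)) /\ G_homotopic aB aB U id F1.

Definition G_section_on (E B : topologicalType) (aE : G -> E -> E)
  (aB : G -> B -> B) (p : E -> B) (U : set B) : Prop :=
  exists s : B -> E,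
    [/\ {within U, continuous s},
        (forall g b, U b -> s (aB g b) = aE g (s b)) &
        G_homotopic aB aB U (p \o s) id].

Definition open_cover_by (B : topologicalType) (P : set B -> Prop) (k : nat)
  : Prop :=
  exists Us : nat -> set B,
    (forall i, (i < k)%N -> open (Us i) /\ P (Us i)) /\
    (forall b, exists2 i, (i < k)%N & Us i b).

(* least k with property Q, or None (= infinity) if there is none *)
Definition least_nat (Q : nat -> Prop) : option nat :=
  match pselect (exists k, Q k) with
  | left h =>
      Some (@ex_minn (fun k => `[< Q k >])
              (let: ex_intro k hk := h in ex_intro _ k (asboolT hk)))
  | right _ => None
  end.

Definition le_oinf (a b : option nat) : Prop :=
  match b with
  | None => True
  | Some m => match a with Some n => (n <= m)%N | None => False end
  end.

Definition cat_G (B : topologicalType) (aB : G -> B -> B) : option nat :=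
  least_nat (open_cover_by (G_categorical aB)).

Definition secat_G (E B : topologicalType) (aE : G -> E -> E)
  (aB : G -> B -> B) (p : E -> B) : option nat :=
  least_nat (open_cover_by
    (fun U => invariant aB U /\ G_section_on aE aB p U)).

End Equivariant.

(* Main.v *)
Require Import Defs.
From HB Require Import structures.
From mathcomp Require Import all_boot all_order all_algebra.
From mathcomp Require Import all_classical all_reals topology normedtype.
Import numFieldNormedType.Exports.
Local Open Scope classical_set_scope.
From mathcomp Require Import lra.
Import Order.TTheory GRing.Theory Num.Theory.
Lemma within_comp (X Y Z : topologicalType) (A' : set X) (A : set Y)
  (phi : X -> Y) (f : Y -> Z) (g : X -> Z) :
  {within A', continuous phi} -> (forall x, A' x -> A (phi x)) ->
  (forall x, A' x -> g x = f (phi x)) -> {within A, continuous f} ->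
  {within A', continuous g}.
Proof.
move=> cphi sA eg cf; apply/continuous_closedP => C cC; apply/closed_subspaceP.
case/continuous_closedP/(_ _ cC)/closed_subspaceP: cf => V cV VE.
case/continuous_closedP/(_ _ cV)/closed_subspaceP: cphi => W cW WE.
exists W => //; rewrite WE; apply/seteqP; split => x [h1 h2]; split => //=.
- have : (V `&` A) (phi x) by split => //; apply: sA.
  by rewrite VE => -[h _]; rewrite /from_subspace eg.
- move: h1; rewrite /from_subspace /= eg // => h1.
  have : (from_subspace A f @^-1` C `&` A) (phi x) by split => //; apply: sA.
  by rewrite -VE => -[].
Qed.

Lemma act_cont (X Y Z : topologicalType) (a : X -> Y -> Z) (y : Y) :
  continuous (fun z : X * Y => a z.1 z.2) -> continuous (fun x => a x y).
Proof.
move=> ca x.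
apply: (@continuous_comp _ _ _ (fun x => (x, y)) (fun z : X * Y => a z.1 z.2)); last exact: ca.
apply: cvg_pair; [exact: cvg_id | exact: cvg_cst].
Qed.

Lemma least_le (P Q : nat -> Prop) :
  (forall k, P k -> Q k) -> le_oinf (least_nat Q) (least_nat P).
Proof.
move=> PQ; rewrite /least_nat.
case: (pselect (exists k, P k)) => [hP|_]; last by case: pselect.
case: (pselect (exists k, Q k)) => [hQ|hQ]; last first.
  by exfalso; apply: hQ; case: hP => k /PQ; exists k.
case: ex_minnP => n Qn minQ; case: ex_minnP => m Pm minP /=.
by apply: minQ; apply/asboolP; apply: PQ; apply/asboolP.
Qed.

Lemma pair_cont_r (X Y : topologicalType) (y : Y) : continuous (fun x : X => (x, y)).
Proof. move=> x; apply: cvg_pair; [exact: cvg_id | exact: cvg_cst]. Qed.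

Lemma pair_cont (X Y Z : topologicalType) (f : X -> Y) (g : X -> Z) :
  continuous f -> continuous g -> continuous (fun x => (f x, g x)).
Proof. by move=> cf cg x; apply: cvg_pair; [exact: cf | exact: cg]. Qed.

Lemma fst_cont (X Y : topologicalType) : continuous (fun z : X * Y => z.1).
Proof. by move=> z; exact: cvg_fst. Qed.

Lemma snd_cont (X Y : topologicalType) : continuous (fun z : X * Y => z.2).
Proof. by move=> z; exact: cvg_snd. Qed.

Lemma flip_cont (R : realType) (X : topologicalType) :
  continuous (fun z : X * R => (z.1, 1 - z.2)%R).
Proof.
apply: pair_cont; first exact: fst_cont.
move=> z; apply: continuousB; first exact: cvg_cst.
exact: snd_cont.
Qed.

Lemma key (R : realType) (G : topologicalType)
  (mul : G -> G -> G) (inv : G -> G) (one : G)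
  (E B : topologicalType) (aE : G -> E -> E) (aB : G -> B -> B) (p : E -> B) :
  is_topological_group mul inv one ->
  compact [set: G] ->
  is_G_space mul one aE -> is_G_space mul one aB ->
  hausdorff_space B ->
  is_G_map aE aB p ->
  (forall H : set G, closed_subgroup mul inv one H ->
     p @` fixed_pts aE H = fixed_pts aB H) ->
  forall U, G_categorical R aB U -> Defs.invariant aB U /\ G_section_on R aE aB p U.
Proof.
move=> [assoc unit invax cmul cinv] cG [aE1 aEm caE] [aB1 aBm caB] hB [cp peq] hfix.
move=> U [invU [F1 [b0 [hF1 [Hm [cHm hHm01 hHmeq]]]]]].
split => //.
pose Hs := [set g | aB g b0 = b0].
have cpi : continuous (fun g => aB g b0) by exact: act_cont.
have cq : forall e, continuous (fun g => aE g e) by move=> e; exact: act_cont.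
have sHs : closed_subgroup mul inv one Hs.
  split.
  - have -> : Hs = (fun g => aB g b0) @^-1` [set b0] by [].
    move/continuous_closedP: cpi; apply.
    exact/accessible_closed_set1/hausdorff_accessible.
  - by rewrite /Hs /= aB1.
  - by move=> g h; rewrite /Hs /= aBm => hg hh; rewrite hh hg.
  - move=> g; rewrite /Hs /= => hg.
    by rewrite -{1}hg -aBm (invax g).1 aB1.
have : fixed_pts aB Hs b0 by move=> h.
rewrite -hfix // => -[e0 fe0 pe0].
have wd : forall g g', aB g b0 = aB g' b0 -> aE g e0 = aE g' e0.
  move=> g g' hgg.
  have hH : Hs (mul (inv g) g').
    by rewrite /Hs /= aBm -hgg -aBm (invax g).1 aB1.
  have -> : g' = mul g (mul (inv g) g').
    by rewrite assoc (invax g).2 (unit g').1.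
  by rewrite aEm (fe0 _ hH).
pose sorb := fun y => aE (xget one [set g | y = aB g b0]) e0.
have sorbE : forall g, sorb (aB g b0) = aE g e0.
  move=> g; rewrite /sorb; apply: wd.
  by rewrite -(@xgetPex _ one [set g' | aB g b0 = aB g' b0]) //; exists g.
have F1E : forall b, U b -> F1 b = Hm (b, 1%R) by move=> b /hHm01 [_ ->].
have I1 : (0 <= (1 : R) <= 1)%R by rewrite ler01 lexx.
exists (fun b => sorb (F1 b)); split.
- apply: (@within_comp _ _ _ U (Defs.orbit aB b0) F1 sorb).
  + apply: (@within_comp _ _ _ U (U `*` [set t : R | (0 <= t <= 1)%R])
             (fun x => (x, 1%R)) Hm) => //.
    * exact/continuous_subspaceT/pair_cont_r.
  + exact: hF1.
  + by [].
  + apply/continuous_closedP => C cC; apply/closed_subspaceP.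
    exists ((fun g => aB g b0) @` ((fun g => aE g e0) @^-1` C)).
      apply: compact_closed hB _; apply: continuous_compact.
        exact: continuous_subspaceT.
      apply: subclosed_compact cG _ => //.
      by move/continuous_closedP: (cq e0); apply.
    apply/seteqP; split => x [h1 h2]; split => //.
    * by case: h1 => h hC <-; rewrite /from_subspace /= sorbE.
    * case: h2 h1 => g ->; rewrite /from_subspace /= sorbE => hC.
      by exists g.
- move=> g b Ub.
  have Ugb : U (aB g b) by exact: invU.
  rewrite F1E // hHmeq // -F1E //.
  case: (hF1 b Ub) => h ->.
  by rewrite -aBm !sorbE aEm.
- exists (fun z => Hm (z.1, 1 - z.2)%R); split.
  + apply: (@within_comp _ _ _ (U `*` [set t : R | (0 <= t <= 1)%R]) (U `*` [set t : R | (0 <= t <= 1)%R])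
             (fun z => (z.1, 1 - z.2)%R) Hm (fun z => Hm (z.1, 1 - z.2)%R)) => //.
    * exact/continuous_subspaceT/flip_cont.
    * move=> [x t] [/= Ux] /andP [t0 t1]; split => //=.
      by apply/andP; split; lra.
  + move=> x Ux /=; rewrite subr0 subrr; split; last by case: (hHm01 x Ux).
    rewrite -F1E //; case: (hF1 x Ux) => h ->.
    by rewrite sorbE peq pe0.
  + move=> g x t Ux /andP [t0 t1] /=; apply: hHmeq => //.
    by apply/andP; split; lra.
Qed.

Theorem proposition4p5 (R : realType) (G : topologicalType)
  (mul : G -> G -> G) (inv : G -> G) (one : G)
  (E B : topologicalType) (aE : G -> E -> E) (aB : G -> B -> B) (p : E -> B) :
  is_topological_group mul inv one ->
  compact [set: G] -> hausdorff_space G ->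
  is_G_space mul one aE -> is_G_space mul one aB ->
  hausdorff_space E -> hausdorff_space B ->
  is_G_map aE aB p ->
  (forall H : set G, closed_subgroup mul inv one H ->
     p @` fixed_pts aE H = fixed_pts aB H) ->
  le_oinf (secat_G R aE aB p) (cat_G R aB).
Proof.
move=> hTG cG _ hGE hGB _ hB hp hfix.
apply: least_le => k [Us [hU cov]]; exists Us; split => // i ik.
case: (hU i ik) => oU cU; split => //.
exact: (@key R G mul inv one E B aE aB p hTG cG hGE hGB hB hp hfix _ cU).
Qed.
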